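(* Let $A$ be an associative unital algebra and $(H,\pi_r,\psi_r)$ a right twisting datum for $A$, where $H$ is a Hopf algebra with bijective antipode $S$. Define $\pi_l:H^{op}\otimes A\to A$, $\pi_l(h\otimes a)=a\cdot h$, and $\psi_l:A\to H^{op}\otimes A$, $\psi_l(a)=S^{-1}(a_{<1>})\otimes a_{<0>}$. Then $(H^{op},\pi_l,\psi_l)$ is a left twisting datum for $A$, and the map $\lambda:(A,\diamond)\to(A,\star)$, $\lambda(a)=a_{<0>}\cdot S^{-1}(a_{<1>})$, is an algebra isomorphism with inverse $\lambda^{-1}(a)=a_{<0>}\cdot a_{<1>}$.
   Context: Work over a field $k$. A right twisting datum $(H,\pi_r,\psi_r)$ for an algebra $A$ ($H$ a bialgebra): $A$ is a right $H$-module algebra (action $\pi_r(a\otimes h)=a\cdot h$, with $(ab)\cdot h=(a\cdot h_1)(b\cdot h_2)$, $1\cdot h=\varepsilon(h)1$) and a right $H$-comodule algebra (coaction $\psi_r(a)=a_{<0>}\otimes a_{<1>}$, an algebra map) with $(a\cdot h)_{<0>}\otimes(a\cdot h)_{<1>}=a_{<0>}\cdot h\otimes a_{<1>}$; the right twisted product is $a\diamond b=(a\cdot b_{<1>})b_{<0>}$. A left twisting datum $(K,\pi,\psi)$ for $A$: $A$ a left $K$-module algebra ($k\cdot a$) and left $K$-comodule algebra ($a\mapsto a_{(-1)}\otimes a_{(0)}$) with $(k\cdot a)_{(-1)}\otimes(k\cdot a)_{(0)}=a_{(-1)}\otimes k\cdot a_{(0)}$; the left twisted product is $a\star b=a_{(0)}(a_{(-1)}\cdot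 b)$. Here $\star$ is the left twisted product for $(H^{op},\pi_l,\psi_l)$, so $a\star b=a_{<0>}(b\cdot S^{-1}(a_{<1>}))$. *)

(* Defs.v *)
From HB Require Import structures.
From mathcomp Require Import all_boot all_algebra.
Set Implicit Arguments. Unset Strict Implicit. Unset Printing Implicit Defensive.
Import GRing.Theory.
Local Open Scope ring_scope.

(* Tensor products are encoded by finite sums of elementary tensors,
   s : seq (V * W) standing for \sum_(p <- s) p.1 (x) p.2 ; two such sums are
   identified iff every bilinear map (into any k-vector space) takes the same
   value on them, i.e. iff they are equal in V (x) W (universal property). *)

Section Defs.
Variable k : fieldType.

Definition lin (V W : lmodType k) (f : V -> W) : Prop :=
  forall (a : k) (x y : V), f (a *: x + y) = a *: f x + f y.

Definition linf (V : lmodType k) (f : V -> k) : Prop :=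
  forall (a : k) (x y : V), f (a *: x + y) = a * f x + f y.

Definition bilin (V W U : lmodType k) (f : V -> W -> U) : Prop :=
  (forall w, lin (fun v => f v w)) /\ (forall v, lin (f v)).

Definition trilin (V W X U : lmodType k) (f : V -> W -> X -> U) : Prop :=
  [/\ forall w x, lin (fun v => f v w x),
      forall v x, lin (fun w => f v w x) &
      forall v w, lin (f v w)].

Definition teq2 (V W : lmodType k) (s t : seq (V * W)) : Prop :=
  forall (U : lmodType k) (f : V -> W -> U), bilin f ->
    \sum_(p <- s) f p.1 p.2 = \sum_(p <- t) f p.1 p.2.

Definition teq3 (V W X : lmodType k) (s t : seq (V * W * X)) : Prop :=
  forall (U : lmodType k) (f : V -> W -> X -> U), trilin f ->
    \sum_(p <- s) f p.1.1 p.1.2 p.2 = \sum_(p <- t) f p.1.1 p.1.2 p.2.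

Definition tlin (V W X : lmodType k) (F : X -> seq (V * W)) : Prop :=
  forall (a : k) (x y : X),
    teq2 (F (a *: x + y)) ([seq (a *: p.1, p.2) | p <- F x] ++ F y).

Record bialg (H : lmodType k) := Bialg {
  bmul : H -> H -> H;
  bone : H;
  bcomul : H -> seq (H * H);
  bcounit : H -> k }.

Definition is_bialgebra (H : lmodType k) (B : bialg H) : Prop :=
  let m := bmul B in let e := bone B in
  let D := bcomul B in let eps := bcounit B in
  [/\
      [/\ bilin m, forall x y z, m (m x y) z = m x (m y z),
          forall x, m e x = x & forall x, m x e = x],
      [/\ tlin D,
          forall h, teq3 [seq (q.1, q.2, p.2) | p <- D h, q <- D p.1]
                         [seq (p.1, q.1, q.2) | p <- D h, q <- D p.2],
          linf eps,
          forall h, \sum_(p <- D h) eps p.1 *: p.2 = h &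
          forall h, \sum_(p <- D h) eps p.2 *: p.1 = h] &
      [/\ forall g h, teq2 (D (m g h)) [seq (m p.1 q.1, m p.2 q.2) | p <- D g, q <- D h],
          teq2 (D e) [:: (e, e)],
          forall g h, eps (m g h) = eps g * eps h &
          eps e = 1]].

Definition is_hopf (H : lmodType k) (B : bialg H) (S : H -> H) : Prop :=
  [/\ is_bialgebra B, lin S,
      forall h, \sum_(p <- bcomul B h) bmul B (S p.1) p.2 = bcounit B h *: bone B &
      forall h, \sum_(p <- bcomul B h) bmul B p.1 (S p.2) = bcounit B h *: bone B].

Definition bialg_op (H : lmodType k) (B : bialg H) : bialg H :=
  Bialg (fun x y => bmul B y x) (bone B) (bcomul B) (bcounit B).

(* Right twisting datum (H, pi_r, psi_r) for A:
   act a h = a . h,  coact a = sum a_<0> (x) a_<1>. *)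
Definition right_twisting_datum (A : algType k) (H : lmodType k) (B : bialg H)
  (act : A -> H -> A) (coact : A -> seq (A * H)) : Prop :=
  [/\ is_bialgebra B,
      [/\ bilin act,
          forall a, act a (bone B) = a,
          forall a g h, act (act a g) h = act a (bmul B g h),
          forall a b h, act (a * b) h = \sum_(p <- bcomul B h) act a p.1 * act b p.2 &
          forall h, act 1 h = bcounit B h *: 1],
      [/\ tlin coact,
          forall a, teq3 [seq (q.1, q.2, p.2) | p <- coact a, q <- coact p.1]
                         [seq (p.1, q.1, q.2) | p <- coact a, q <- bcomul B p.2],
          forall a, \sum_(p <- coact a) bcounit B p.2 *: p.1 = a,
          forall a b, teq2 (coact (a * b))
                           [seq (p.1 * q.1, bmul B p.2 q.2) | p <- coact a, q <- coact b] &
          teq2 (coact 1) [:: (1, bone B)]] &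
      forall a h, teq2 (coact (act a h)) [seq (act p.1 h, p.2) | p <- coact a]].

(* Left twisting datum (K, pi, psi) for A:
   lact x a = x . a,  lcoact a = sum a_(-1) (x) a_(0). *)
Definition left_twisting_datum (A : algType k) (K : lmodType k) (B : bialg K)
  (lact : K -> A -> A) (lcoact : A -> seq (K * A)) : Prop :=
  [/\ is_bialgebra B,
      [/\ bilin lact,
          forall a, lact (bone B) a = a,
          forall x y a, lact x (lact y a) = lact (bmul B x y) a,
          forall x a b, lact x (a * b) = \sum_(p <- bcomul B x) lact p.1 a * lact p.2 b &
          forall x, lact x 1 = bcounit B x *: 1],
      [/\ tlin lcoact,
          forall a, teq3 [seq (q.1, q.2, p.2) | p <- lcoact a, q <- bcomul B p.1]
                         [seq (p.1, q.1, q.2) | p <- lcoact a, q <- lcoact p.2],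
          forall a, \sum_(p <- lcoact a) bcounit B p.1 *: p.2 = a,
          forall a b, teq2 (lcoact (a * b))
                           [seq (bmul B p.1 q.1, p.2 * q.2) | p <- lcoact a, q <- lcoact b] &
          teq2 (lcoact 1) [:: (bone B, 1)]] &
      forall x a, teq2 (lcoact (lact x a)) [seq (p.1, lact x p.2) | p <- lcoact a]].

Definition rtwist (A : algType k) (H : lmodType k) (act : A -> H -> A)
  (coact : A -> seq (A * H)) (a b : A) : A :=
  \sum_(p <- coact b) act a p.2 * p.1.

Definition ltwist (A : algType k) (K : lmodType k) (lact : K -> A -> A)
  (lcoact : A -> seq (K * A)) (a b : A) : A :=
  \sum_(p <- lcoact a) p.2 * lact p.1 b.

End Defs.

(* Main.v *)
Require Import Defs.
From mathcomp Require Import all_boot all_algebra.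
Set Implicit Arguments. Unset Strict Implicit. Unset Printing Implicit Defensive.
Import GRing.Theory.
Local Open Scope ring_scope.

Section Gen.
Variable k : fieldType.
Implicit Types V W X U Y Z : lmodType k.

Lemma lin0 V W (f : V -> W) : lin f -> f 0 = 0.
Proof.
move=> Hf; have := Hf 1 0 0; rewrite scaler0 addr0 scale1r => E.
by have := congr1 (fun z => z - f 0) E; rewrite subrr addrK => <-.
Qed.

Lemma linD V W (f : V -> W) x y : lin f -> f (x + y) = f x + f y.
Proof. by move=> Hf; rewrite -{1}(scale1r x) (Hf 1 x y) scale1r. Qed.

Lemma linZ V W (f : V -> W) a x : lin f -> f (a *: x) = a *: f x.
Proof. by move=> Hf; rewrite -(addr0 (a *: x)) (Hf a x 0) (lin0 Hf) addr0. Qed.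

Lemma lin_sumE V W (f : V -> W) I (s : seq I) (F : I -> V) :
  lin f -> f (\sum_(i <- s) F i) = \sum_(i <- s) f (F i).
Proof.
move=> Hf; elim: s => [|i s IH]; first by rewrite !big_nil (lin0 Hf).
by rewrite !big_cons (linD _ _ Hf) IH.
Qed.

Lemma linf0 V (f : V -> k) : linf f -> f 0 = 0.
Proof.
move=> Hf; have := Hf 1 0 0; rewrite scaler0 addr0 mul1r => E.
by have := congr1 (fun z => z - f 0) E; rewrite subrr addrK => <-.
Qed.

Lemma linfD V (f : V -> k) x y : linf f -> f (x + y) = f x + f y.
Proof. by move=> Hf; rewrite -{1}(scale1r x) (Hf 1 x y) mul1r. Qed.

Lemma linfZ V (f : V -> k) a x : linf f -> f (a *: x) = a * f x.
Proof. by move=> Hf; rewrite -(addr0 (a *: x)) (Hf a x 0) (linf0 Hf) addr0. Qed.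

Lemma linf_sumE V (f : V -> k) I (s : seq I) (F : I -> V) :
  linf f -> f (\sum_(i <- s) F i) = \sum_(i <- s) f (F i).
Proof.
move=> Hf; elim: s => [|i s IH]; first by rewrite !big_nil (linf0 Hf).
by rewrite !big_cons (linfD _ _ Hf) IH.
Qed.

Lemma lin_id V : lin (fun x : V => x).
Proof. by []. Qed.

Lemma lin_cst0 V W : lin (fun _ : V => (0 : W)).
Proof. by move=> a x y; rewrite scaler0 addr0. Qed.

Lemma lin_comp V W X (f : W -> X) (F : V -> W) :
  lin f -> lin F -> lin (fun x => f (F x)).
Proof. by move=> Hf HF a x y; rewrite HF Hf. Qed.

Lemma lin_sum V W I (s : seq I) (F : I -> V -> W) :
  (forall i, lin (F i)) -> lin (fun x => \sum_(i <- s) F i x).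
Proof.
move=> HF a x y; rewrite scaler_sumr -big_split /=.
by apply: eq_bigr => i _; rewrite HF.
Qed.

Lemma lin_scl V W (c : k) (F : V -> W) : lin F -> lin (fun x => c *: F x).
Proof. by move=> HF a x y; rewrite HF scalerDr !scalerA mulrC. Qed.

Lemma lin_sclf V W (e : V -> k) (v : W) : linf e -> lin (fun x => e x *: v).
Proof. by move=> He a x y; rewrite He scalerDl scalerA. Qed.

Lemma lin_bl V W X Y (f : V -> W -> X) (F : Y -> V) c :
  bilin f -> lin F -> lin (fun x => f (F x) c).
Proof. by case=> H1 _ HF; apply: (lin_comp (H1 c)). Qed.

Lemma lin_br V W X Y (f : V -> W -> X) (F : Y -> W) c :
  bilin f -> lin F -> lin (fun x => f c (F x)).
Proof. by case=> _ H2 HF; apply: (lin_comp (H2 c)). Qed.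

Lemma tlin_sum V W X (D : X -> seq (V * W)) U' (f : V -> W -> U') :
  tlin D -> bilin f -> lin (fun x => \sum_(p <- D x) f p.1 p.2).
Proof.
move=> HD Hf a x y; rewrite (HD a x y U' f Hf) big_cat /= big_map scaler_sumr.
by congr (_ + _); apply: eq_bigr => p _; case: Hf => H1 _; rewrite (linZ _ _ (H1 p.2)).
Qed.

Lemma lin_tl V W X Y (D : X -> seq (V * W)) U' (f : V -> W -> U') (F : Y -> X) :
  tlin D -> bilin f -> lin F -> lin (fun x => \sum_(p <- D (F x)) f p.1 p.2).
Proof. by move=> HD Hf HF; apply: (lin_comp (tlin_sum HD Hf)). Qed.

Lemma lin_t1 V W X Z Y (f : V -> W -> X -> Z) (F : Y -> V) c d :
  (forall w x, lin (fun v => f v w x)) -> lin F -> lin (fun y => f (F y) c d).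
Proof. by move=> H1 HF; apply: (lin_comp (H1 c d)). Qed.
Lemma lin_t2 V W X Z Y (f : V -> W -> X -> Z) (F : Y -> W) c d :
  (forall v x, lin (fun w => f v w x)) -> lin F -> lin (fun y => f c (F y) d).
Proof. by move=> H1 HF; apply: (lin_comp (H1 c d)). Qed.
Lemma lin_t3 V W X Z Y (f : V -> W -> X -> Z) (F : Y -> X) c d :
  (forall v w, lin (f v w)) -> lin F -> lin (fun y => f c d (F y)).
Proof. by move=> H1 HF; apply: (lin_comp (H1 c d)). Qed.

Lemma lin_tlp V W X Y (D : X -> seq (V * W)) U' (g : V * W -> U') (F : Y -> X) :
  tlin D -> bilin (fun a b => g (a, b)) -> lin F -> lin (fun x => \sum_(p <- D (F x)) g p).
Proof.
move=> HD Hf HF a x y.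
have E z : \sum_(p <- D z) g p = \sum_(p <- D z) (fun a b => g (a, b)) p.1 p.2.
  by apply: eq_bigr => -[].
by rewrite !E; exact: (lin_tl HD Hf HF).
Qed.

Lemma bilin_mulA (A : algType k) : bilin (@GRing.mul A).
Proof.
split=> w a x y; first by rewrite mulrDl scalerAl.
by rewrite mulrDr scalerAr.
Qed.

Lemma teq2_sum V W (s t : seq (V * W)) U' (f : V -> W -> U') :
  teq2 s t -> bilin f -> \sum_(p <- s) f p.1 p.2 = \sum_(p <- t) f p.1 p.2.
Proof. by move=> H Hf; apply: H. Qed.

Lemma teq3_nested V W X Y Z (s : seq (X*Y)) (t : X -> seq (V * W))
   (s' : seq (V * Z)) (t' : Z -> seq (W * Y)) U' (f : V -> W -> Y -> U') :
  teq3 [seq (q.1, q.2, p.2) | p <- s, q <- t p.1]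
       [seq (p.1, q.1, q.2) | p <- s', q <- t' p.2] ->
  trilin f ->
  \sum_(p <- s) \sum_(q <- t p.1) f q.1 q.2 p.2 =
  \sum_(p <- s') \sum_(q <- t' p.2) f p.1 q.1 q.2.
Proof.
move=> H Hf; have := H U' f Hf.
by rewrite !big_allpairs_dep.
Qed.

End Gen.



Ltac linsolve2 :=
  cbv beta; repeat (first
   [ exact: lin_id
   | assumption
   | (progress cbv beta)
   | (apply: lin_sum => ?)
   | (apply: lin_cst0)
   | (apply: lin_scl)
   | (apply: lin_sclf; assumption)
   | (match goal with |- trilin _ => split => ? ? end)
   | (split => ? )
   | (apply: lin_tl; [assumption| |])
   | (apply: lin_tlp; [assumption| simpl |])
   | (apply: lin_bl; [assumption|])
   | (apply: lin_br; [assumption|])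
   | (apply: lin_comp; [assumption|])
   | (apply: lin_t1; [eassumption|])
   | (apply: lin_t2; [eassumption|])
   | (apply: lin_t3; [eassumption|])
   ]).

Section Bialg.
Variable k : fieldType.
Variable H : lmodType k.
Variable B : bialg H.
Hypothesis hB : is_bialgebra B.
Local Notation m := (bmul B).
Local Notation D := (bcomul B).
Local Notation eps := (bcounit B).
Local Notation e := (bone B).

Lemma bilin_m : bilin m. Proof. by case: hB => [[]]. Qed.
Lemma massoc x y z : m (m x y) z = m x (m y z). Proof. by case: hB => [[]]. Qed.
Lemma m1x x : m e x = x. Proof. by case: hB => [[]]. Qed.
Lemma mx1 x : m x e = x. Proof. by case: hB => [[]]. Qed.
Lemma tlin_D : tlin D. Proof. by case: hB => _ []. Qed.
Lemma linf_eps : linf eps. Proof. by case: hB => _ []. Qed.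
Lemma epsm g h : eps (m g h) = eps g * eps h. Proof. by case: hB => _ _ []. Qed.
Lemma eps1 : eps e = 1. Proof. by case: hB => _ _ []. Qed.

Lemma CA (U : lmodType k) (G : H -> H -> H -> U) h : trilin G ->
  \sum_(p <- D h) \sum_(q <- D p.1) G q.1 q.2 p.2 =
  \sum_(p <- D h) \sum_(q <- D p.2) G p.1 q.1 q.2.
Proof. by case: hB => _ [_ Hc _ _ _] _; apply: teq3_nested. Qed.

Lemma cuL (U : lmodType k) (F : H -> U) h : lin F ->
  \sum_(p <- D h) eps p.1 *: F p.2 = F h.
Proof.
case: hB => _ [_ _ _ Hc _] _ HF.
by rewrite -[in RHS](Hc h) (lin_sumE _ _ HF); apply: eq_bigr => p _; rewrite linZ.
Qed.

Lemma cuR (U : lmodType k) (F : H -> U) h : lin F ->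
  \sum_(p <- D h) eps p.2 *: F p.1 = F h.
Proof.
case: hB => _ [_ _ _ _ Hc] _ HF.
by rewrite -[in RHS](Hc h) (lin_sumE _ _ HF); apply: eq_bigr => p _; rewrite linZ.
Qed.

Lemma Dmul (U : lmodType k) (f : H -> H -> U) g h : bilin f ->
  \sum_(r <- D (m g h)) f r.1 r.2 =
  \sum_(p <- D g) \sum_(q <- D h) f (m p.1 q.1) (m p.2 q.2).
Proof.
case: hB => _ _ [Hm _ _ _] Hf; rewrite (teq2_sum (Hm g h) Hf).
by rewrite big_allpairs_dep.
Qed.

Lemma Dunit (U : lmodType k) (f : H -> H -> U) : bilin f ->
  \sum_(r <- D e) f r.1 r.2 = f e e.
Proof.
case: hB => _ _ [_ Hm _ _] Hf; rewrite (teq2_sum Hm Hf).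
by rewrite big_cons big_nil addr0.
Qed.

End Bialg.


Section Hopf.
Variable k : fieldType.
Variable H : lmodType k.
Variable B : bialg H.
Variable S : H -> H.
Hypothesis hS : is_hopf B S.
Local Notation m := (bmul B).
Local Notation D := (bcomul B).
Local Notation eps := (bcounit B).
Local Notation e := (bone B).

Lemma hB : is_bialgebra B. Proof. by case: hS. Qed.
Lemma lin_S : lin S. Proof. by case: hS. Qed.
Lemma antiL h : \sum_(p <- D h) m (S p.1) p.2 = eps h *: e. Proof. by case: hS. Qed.
Lemma antiR h : \sum_(p <- D h) m p.1 (S p.2) = eps h *: e. Proof. by case: hS. Qed.

Let bm := bilin_m hB.
Let mA := massoc hB.
Let m1 := m1x hB.
Let m1' := mx1 hB.
Let eM := epsm hB.
Let e1 := eps1 hB.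
Let lS := lin_S.
Let lD := tlin_D hB.
Let le := linf_eps hB.

Lemma antiL' z h : \sum_(p <- D h) m (S p.1) (m p.2 z) = eps h *: z.
Proof.
have L : lin (fun x => m x z) by linsolve2.
transitivity (m (\sum_(p <- D h) m (S p.1) p.2) z).
  by rewrite (lin_sumE _ _ L); apply: eq_bigr => p _; rewrite mA.
by rewrite antiL (linZ _ _ L) m1.
Qed.

Lemma antiR' z h : \sum_(p <- D h) m p.1 (m (S p.2) z) = eps h *: z.
Proof.
have L : lin (fun x => m x z) by linsolve2.
transitivity (m (\sum_(p <- D h) m p.1 (S p.2)) z).
  by rewrite (lin_sumE _ _ L); apply: eq_bigr => p _; rewrite mA.
by rewrite antiR (linZ _ _ L) m1.
Qed.

Lemma S1 : S e = e.
Proof.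
rewrite -[LHS]m1' -(Dunit hB (f := fun x y => m (S x) y)); last by linsolve2.
by rewrite antiL e1 scale1r.
Qed.

Lemma epsS h : eps (S h) = eps h.
Proof.
have E1 : eps h = \sum_(p <- D h) eps (S p.1) * eps p.2.
  rewrite -[LHS]mulr1 -e1 -(linfZ _ _ le) -antiL (linf_sumE _ _ le).
  by apply: eq_bigr => p _; rewrite eM.
have E0 : \sum_(p <- D h) eps p.2 *: p.1 = h by exact: (cuR hB h (@lin_id _ H)).
rewrite E1 -{1}E0 (lin_sumE _ _ lS) (linf_sumE _ _ le).
by apply: eq_bigr => p _; rewrite (linZ _ _ lS) (linfZ _ _ le) mulrC.
Qed.

Let G x1 x2 x3 y1 y2 y3 :=
  m (S (m x1 y1)) (m x2 (m y2 (m (S y3) (S x3)))).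

Lemma antimul_step1 a b g h :
  \sum_(r <- D g) \sum_(s <- D h) G a r.1 r.2 b s.1 s.2 =
  (eps g * eps h) *: S (m a b).
Proof.
rewrite /G.
transitivity (\sum_(r <- D g) m (S (m a b)) (m r.1
                 (\sum_(s <- D h) m s.1 (m (S s.2) (S r.2))))).
  apply: eq_bigr => r _.
  have L : lin (fun x => m (S (m a b)) (m r.1 x)) by linsolve2.
  by rewrite (lin_sumE _ _ L).
transitivity (\sum_(r <- D g) eps h *: m (S (m a b)) (m r.1 (S r.2))).
  apply: eq_bigr => r _; rewrite antiR'.
  have L : lin (fun x => m (S (m a b)) (m r.1 x)) by linsolve2.
  by rewrite (linZ _ _ L).
rewrite -scaler_sumr.
have L : lin (fun x => m (S (m a b)) x) by linsolve2.
rewrite -(lin_sumE _ _ L).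
transitivity (eps h *: m (S (m a b)) (\sum_(r <- D g) m r.1 (S r.2))).
  by congr (_ *: m _ _); apply: eq_bigr => r _.
by rewrite antiR (linZ _ _ L) m1' scalerA mulrC.
Qed.

Lemma antimul_step2 c d g h :
  \sum_(r <- D g) \sum_(s <- D h) G r.1 r.2 c s.1 s.2 d =
  (eps g * eps h) *: m (S d) (S c).
Proof.
rewrite /G.
set Z := m (S d) (S c).
transitivity (\sum_(t <- D (m g h)) m (S t.1) (m t.2 Z)); last first.
  by rewrite antiL' eM.
rewrite (Dmul hB (f := fun x y => m (S x) (m y Z))); last by linsolve2.
by apply: eq_bigr => r _; apply: eq_bigr => s _; rewrite mA.
Qed.

Lemma Santimul g h : S (m g h) = m (S h) (S g).
Proof.
set T := \sum_(p <- D g) \sum_(q <- D h) \sum_(r <- D p.2) \sum_(s <- D q.2)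
           G p.1 r.1 r.2 q.1 s.1 s.2.
have E1 : T = S (m g h).
  rewrite /T.
  transitivity (\sum_(p <- D g) eps p.2 *: \sum_(q <- D h) eps q.2 *: S (m p.1 q.1)).
    apply: eq_bigr => p _; rewrite scaler_sumr; apply: eq_bigr => q _.
    by rewrite antimul_step1 scalerA.
  transitivity (\sum_(p <- D g) eps p.2 *: S (m p.1 h)).
    apply: eq_bigr => p _; congr (_ *: _).
    by apply: (cuR hB (F := fun y => S (m p.1 y))); linsolve2.
  by apply: (cuR hB (F := fun x => S (m x h))); linsolve2.
have E2 : T = m (S h) (S g).
  rewrite /T.
  transitivity (\sum_(p <- D g) \sum_(r <- D p.2) \sum_(q <- D h) \sum_(s <- D q.2)
           G p.1 r.1 r.2 q.1 s.1 s.2).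
    by apply: eq_bigr => p _; rewrite exchange_big.
  rewrite -(CA hB (G := fun x1 x2 x3 => \sum_(q <- D h) \sum_(s <- D q.2)
           G x1 x2 x3 q.1 s.1 s.2)); last by rewrite /G; linsolve2.
  transitivity (\sum_(p <- D g) \sum_(r <- D p.1) \sum_(q <- D h) \sum_(s <- D q.1)
           G r.1 r.2 p.2 s.1 s.2 q.2).
    apply: eq_bigr => p _; apply: eq_bigr => r _.
    by rewrite (CA hB (G := fun y1 y2 y3 => G r.1 r.2 p.2 y1 y2 y3)) //; rewrite /G; linsolve2.
  transitivity (\sum_(p <- D g) \sum_(q <- D h) (eps p.1 * eps q.1) *: m (S q.2) (S p.2)).
    by apply: eq_bigr => p _; rewrite exchange_big; apply: eq_bigr => q _; rewrite antimul_step2.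
  transitivity (\sum_(p <- D g) eps p.1 *: m (S h) (S p.2)).
    apply: eq_bigr => p _; rewrite -(cuL hB (F := fun y => m (S y) (S p.2))); last by linsolve2.
    by rewrite scaler_sumr; apply: eq_bigr => q _; rewrite scalerA.
  by apply: (cuL hB (F := fun x => m (S h) (S x))); linsolve2.
by rewrite -E1 -E2.
Qed.


Section Anticomul.
Variable U : lmodType k.
Variable f : H -> H -> U.
Hypothesis Hf : bilin f.

Lemma Kconv c d y :
  \sum_(q <- D y) \sum_(u <- D q.1) \sum_(v <- D q.2)
     f (m c (m u.1 (S v.2))) (m d (m u.2 (S v.1))) = eps y *: f c d.
Proof.
pose g a b := f (m c a) (m d b).
have Hg : bilin g by rewrite /g; linsolve2.
rewrite (CA hB (G := fun a b z => \sum_(v <- D z) g (m a (S v.2)) (m b (S v.1))));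
  last by linsolve2.
transitivity (\sum_(q <- D y) \sum_(u <- D q.2) \sum_(v <- D u.1)
   g (m q.1 (S u.2)) (m v.1 (S v.2))).
  apply: eq_bigr => q _.
  by rewrite -(CA hB (G := fun b x z => g (m q.1 (S z)) (m b (S x)))) //; linsolve2.
transitivity (\sum_(q <- D y) g (m q.1 (S q.2)) e).
  apply: eq_bigr => q _.
  transitivity (\sum_(u <- D q.2) eps u.1 *: g (m q.1 (S u.2)) e); last first.
    by apply: (cuL hB (F := fun x => g (m q.1 (S x)) e)); linsolve2.
  apply: eq_bigr => u _.
  have L : lin (fun x => g (m q.1 (S u.2)) x) by linsolve2.
  by rewrite -(linZ _ _ L) -antiR (lin_sumE _ _ L).
have L : lin (fun x => g x e) by linsolve2.
by rewrite -(lin_sumE _ _ L) antiR (linZ _ _ L) /g !m1'.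
Qed.

Lemma Santicomul h :
  \sum_(t <- D (S h)) f t.1 t.2 = \sum_(p <- D h) f (S p.2) (S p.1).
Proof.
pose Gq x y z := \sum_(t <- D (S x)) \sum_(u <- D y) \sum_(v <- D z)
   f (m t.1 (m u.1 (S v.2))) (m t.2 (m u.2 (S v.1))).
have HG : trilin Gq by rewrite /Gq; linsolve2.
have E1 : \sum_(p <- D h) \sum_(q <- D p.2) Gq p.1 q.1 q.2 =
          \sum_(t <- D (S h)) f t.1 t.2.
  transitivity (\sum_(p <- D h) eps p.2 *: \sum_(t <- D (S p.1)) f t.1 t.2); last first.
    by apply: (cuR hB (F := fun x => \sum_(t <- D (S x)) f t.1 t.2)); linsolve2.
  apply: eq_bigr => p _; rewrite /Gq exchange_big scaler_sumr /=.
  by apply: eq_bigr => t _; rewrite Kconv.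
rewrite -E1 -(CA hB (G := Gq)) //.
transitivity (\sum_(p <- D h) eps p.1 *: \sum_(v <- D p.2) f (S v.2) (S v.1)); last first.
  by apply: (cuL hB (F := fun z => \sum_(v <- D z) f (S v.2) (S v.1))); linsolve2.
apply: eq_bigr => p _; rewrite /Gq.
set z := p.2.
pose W a b := \sum_(v <- D z) f (m a (S v.2)) (m b (S v.1)).
have HW : bilin W by rewrite /W; linsolve2.
have LW : lin (fun x => \sum_(r <- D x) W r.1 r.2) by linsolve2.
transitivity (\sum_(q <- D p.1) \sum_(r <- D (m (S q.1) q.2)) W r.1 r.2).
  apply: eq_bigr => q _; rewrite (Dmul hB _ _ HW).
  apply: eq_bigr => t _; apply: eq_bigr => u _; rewrite /W.
  by apply: eq_bigr => v _; rewrite !mA.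
rewrite -(lin_sumE _ _ LW) antiL (linZ _ _ LW) (Dunit hB HW) /W.
by congr (_ *: _); apply: eq_bigr => v _; rewrite !m1.
Qed.

End Anticomul.

End Hopf.


Section Inv.
Variable k : fieldType.
Variable H : lmodType k.
Variable B : bialg H.
Variables S Sinv : H -> H.
Hypothesis hS : is_hopf B S.
Hypothesis SK : cancel S Sinv.
Hypothesis SinvK : cancel Sinv S.
Local Notation m := (bmul B).
Local Notation D := (bcomul B).
Local Notation eps := (bcounit B).
Local Notation e := (bone B).

Let hB := hB hS.
Let bm := bilin_m hB.
Let mA := massoc hB.
Let m1 := m1x hB.
Let m1' := mx1 hB.
Let lS := lin_S hS.
Let lD := tlin_D hB.
Let le := linf_eps hB.
Let Sinj : injective S := can_inj SK.

Lemma lin_Sinv : lin Sinv.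
Proof. by move=> a x y; apply: Sinj; rewrite lS !SinvK. Qed.
Let lSi := lin_Sinv.

Lemma Sinv1 : Sinv e = e.
Proof. by rewrite -{1}(S1 hS) SK. Qed.

Lemma epsSinv h : eps (Sinv h) = eps h.
Proof. by rewrite -(epsS hS) SinvK. Qed.

Lemma Sinvmul g h : Sinv (m g h) = m (Sinv h) (Sinv g).
Proof. by apply: Sinj; rewrite (Santimul hS) !SinvK. Qed.

Lemma Sinvcomul (U : lmodType k) (f : H -> H -> U) h : bilin f ->
  \sum_(t <- D (Sinv h)) f t.1 t.2 = \sum_(p <- D h) f (Sinv p.2) (Sinv p.1).
Proof.
move=> Hf.
have Hf' : bilin (fun u v => f (Sinv v) (Sinv u)) by linsolve2.
rewrite -{2}(SinvK h) (Santicomul hS Hf').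
by apply: eq_bigr => p _; rewrite !SK.
Qed.

Lemma antiiL h : \sum_(q <- D h) m (Sinv q.2) q.1 = eps h *: e.
Proof.
apply: Sinj; rewrite (lin_sumE _ _ lS) (linZ _ _ lS) (S1 hS) -(antiL hS).
by apply: eq_bigr => q _; rewrite (Santimul hS) SinvK.
Qed.

Lemma antiiR h : \sum_(q <- D h) m q.2 (Sinv q.1) = eps h *: e.
Proof.
apply: Sinj; rewrite (lin_sumE _ _ lS) (linZ _ _ lS) (S1 hS) -(antiR hS).
by apply: eq_bigr => q _; rewrite (Santimul hS) SinvK.
Qed.

Lemma antiiR' z h : \sum_(q <- D h) m q.2 (m (Sinv q.1) z) = eps h *: z.
Proof.
have L : lin (fun x => m x z) by linsolve2.
transitivity (m (\sum_(p <- D h) m p.2 (Sinv p.1)) z).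
  by rewrite (lin_sumE _ _ L); apply: eq_bigr => p _; rewrite mA.
by rewrite antiiR (linZ _ _ L) m1.
Qed.

End Inv.


Section Main.
Variable k : fieldType.
Variable A : algType k.
Variable H : lmodType k.
Variable B : bialg H.
Variables S Sinv : H -> H.
Variable act : A -> H -> A.
Variable coact : A -> seq (A * H).
Hypothesis hS : is_hopf B S.
Hypothesis SK : cancel S Sinv.
Hypothesis SinvK : cancel Sinv S.
Hypothesis hR : right_twisting_datum B act coact.
Local Notation m := (bmul B).
Local Notation D := (bcomul B).
Local Notation eps := (bcounit B).
Local Notation e := (bone B).

Let hB := hB hS.
Let bm := bilin_m hB.
Let mA := massoc hB.
Let m1 := m1x hB.
Let m1' := mx1 hB.
Let lS := lin_S hS.
Let lD := tlin_D hB.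
Let le := linf_eps hB.
Let lSi := lin_Sinv hS SK SinvK.
Let bA := bilin_mulA A.

Lemma bact : bilin act. Proof. by case: hR => _ []. Qed.
Lemma act_one a : act a e = a. Proof. by case: hR => _ []. Qed.
Lemma act_act a g h : act (act a g) h = act a (m g h). Proof. by case: hR => _ []. Qed.
Lemma act_mul a b h : act (a * b) h = \sum_(p <- D h) act a p.1 * act b p.2.
Proof. by case: hR => _ []. Qed.
Lemma act_1 h : act 1 h = eps h *: 1. Proof. by case: hR => _ []. Qed.
Lemma tlin_c : tlin coact. Proof. by case: hR => _ _ []. Qed.
Let ba := bact.
Let lc := tlin_c.

Lemma CAc (U : lmodType k) (G : A -> H -> H -> U) a : trilin G ->
  \sum_(p <- coact a) \sum_(q <- coact p.1) G q.1 q.2 p.2 =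
  \sum_(p <- coact a) \sum_(q <- D p.2) G p.1 q.1 q.2.
Proof. by case: hR => _ _ [_ Hc _ _ _] _; apply: teq3_nested. Qed.

Lemma cuc a : \sum_(p <- coact a) eps p.2 *: p.1 = a.
Proof. by case: hR => _ _ []. Qed.

Lemma coact_mul (U : lmodType k) (f : A -> H -> U) a b : bilin f ->
  \sum_(r <- coact (a * b)) f r.1 r.2 =
  \sum_(p <- coact a) \sum_(q <- coact b) f (p.1 * q.1) (m p.2 q.2).
Proof.
case: hR => _ _ [_ _ _ Hm _] _ Hf; rewrite (teq2_sum (Hm a b) Hf).
by rewrite big_allpairs_dep.
Qed.

Lemma coact_1 (U : lmodType k) (f : A -> H -> U) : bilin f ->
  \sum_(r <- coact 1) f r.1 r.2 = f 1 e.
Proof.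
case: hR => _ _ [_ _ _ _ Hm] _ Hf; rewrite (teq2_sum Hm Hf).
by rewrite big_cons big_nil addr0.
Qed.

Lemma coact_act (U : lmodType k) (f : A -> H -> U) a h : bilin f ->
  \sum_(r <- coact (act a h)) f r.1 r.2 =
  \sum_(p <- coact a) f (act p.1 h) p.2.
Proof.
case: hR => _ _ _ Hm Hf; rewrite (teq2_sum (Hm a h) Hf).
by rewrite big_map.
Qed.

Let pil : H -> A -> A := fun h a => act a h.
Let psil : A -> seq (H * A) := fun a => [seq (Sinv p.2, p.1) | p <- coact a].

Lemma left_datum : left_twisting_datum (bialg_op B) pil psil.
Proof.
have Eps (U : lmodType k) (f : H -> A -> U) a :
    \sum_(p <- psil a) f p.1 p.2 = \sum_(p <- coact a) f (Sinv p.2) p.1.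
  by rewrite big_map.
split.
- have Halg : [/\ bilin (fun x y => m y x), forall x y z, m z (m y x) = m (m z y) x,
     forall x, m x e = x & forall x, m e x = x].
    split.
    * by case: bm => H1 H2; split.
    * by move=> x y z; rewrite mA.
    * exact: m1'.
    * exact: m1.
  have Hcomp : [/\ forall g h, teq2 (D (m h g)) [seq (m q.1 p.1, m q.2 p.2) | p <- D g, q <- D h],
      teq2 (D e) [:: (e, e)], forall g h, eps (m h g) = eps g * eps h & eps e = 1].
    split.
    * move=> g h U f Hf; rewrite (Dmul hB _ _ Hf) big_allpairs_dep exchange_big.
      done.
    * by case: hB => _ _ [].
    * by move=> g h; rewrite (epsm hB) mulrC.
    * exact: (eps1 hB).
  by split => //; case: hB => _ ? _.
- split => /=.
  + by case: ba => H1 H2; split.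
  + exact: act_one.
  + by move=> x y a; rewrite /pil act_act.
  + by move=> x a b; rewrite /pil act_mul.
  + exact: act_1.
- split.
  + move=> a x y U f Hf; rewrite /psil big_cat /= !big_map.
    have Hf' : bilin (fun u h => f (Sinv h) u) by linsolve2.
    rewrite (tlin_c a x y Hf') big_cat /= big_map; congr (_ + _).
    by apply: eq_bigr => p _ /=; case: Hf => H1 H2; rewrite (linZ _ _ (H1 _)) (linZ _ _ (H2 _)).
  + move=> a U f Hf.
    rewrite big_allpairs_dep big_map big_allpairs_dep.
    transitivity (\sum_(p <- coact a) \sum_(q <- D p.2) f (Sinv q.2) (Sinv q.1) p.1).
      apply: eq_bigr => p _ /=.
      by rewrite (Sinvcomul hS SK SinvK (f := fun u v => f u v p.1)) //; case: Hf => H1 H2 H3; linsolve2.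
    rewrite -(CAc (G := fun x y z => f (Sinv z) (Sinv y) x)); last first.
      by case: Hf => H1 H2 H3; linsolve2.
    by rewrite /psil big_map; apply: eq_bigr => p _; rewrite big_map.
  + move=> a; rewrite /psil big_map -[RHS]cuc; apply: eq_bigr => p _.
    by rewrite (epsSinv hS SinvK).
  + move=> a b U f Hf; rewrite /psil big_map big_allpairs_dep big_map.
    have Hf' : bilin (fun u h => f (Sinv h) u) by linsolve2.
    rewrite (coact_mul _ _ Hf'); apply: eq_bigr => p _; rewrite big_map /=.
    by apply: eq_bigr => q _; rewrite (Sinvmul hS SK SinvK).
  + move=> U f Hf; rewrite /psil big_map.
    have Hf' : bilin (fun u h => f (Sinv h) u) by linsolve2.
    by rewrite (coact_1 Hf') big_cons big_nil addr0 (Sinv1 hS SK).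
- move=> x a U f Hf; rewrite /psil big_map big_map /=.
  have Hf' : bilin (fun u h => f (Sinv h) u) by linsolve2.
  by rewrite (coact_act _ _ Hf') big_map.
Qed.


Let lamf : A -> A := fun a => \sum_(p <- coact a) act p.1 (Sinv p.2).
Let laminvf : A -> A := fun a => \sum_(p <- coact a) act p.1 p.2.

Lemma lin_lam : lin lamf.
Proof. by rewrite /lamf; linsolve2. Qed.
Lemma lin_laminv : lin laminvf.
Proof. by rewrite /laminvf; linsolve2. Qed.

Lemma lam1 : lamf 1 = 1.
Proof.
rewrite /lamf (coact_1 (f := fun u h => act u (Sinv h))); last by linsolve2.
by rewrite (Sinv1 hS SK) act_one.
Qed.

Lemma lamK : cancel lamf laminvf.
Proof.
move=> a; rewrite {1}/lamf (lin_sumE _ _ lin_laminv) /laminvf.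
transitivity (\sum_(p <- coact a) \sum_(q <- coact p.1) act q.1 (m (Sinv p.2) q.2)).
  apply: eq_bigr => p _; rewrite (coact_act (f := act)) //.
  by apply: eq_bigr => q _; rewrite act_act.
rewrite (CAc (G := fun x y z => act x (m (Sinv z) y))); last by linsolve2.
rewrite -[RHS]cuc; apply: eq_bigr => p _.
have L : lin (fun x => act p.1 x) by linsolve2.
by rewrite -(lin_sumE _ _ L) (antiiL hS SK SinvK) (linZ _ _ L) act_one.
Qed.

Lemma laminvK : cancel laminvf lamf.
Proof.
move=> a; rewrite {1}/laminvf (lin_sumE _ _ lin_lam) /lamf.
transitivity (\sum_(p <- coact a) \sum_(q <- coact p.1) act q.1 (m p.2 (Sinv q.2))).
  apply: eq_bigr => p _; rewrite (coact_act (f := fun u h => act u (Sinv h))); last by linsolve2.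
  by apply: eq_bigr => q _; rewrite act_act.
rewrite (CAc (G := fun x y z => act x (m z (Sinv y)))); last by linsolve2.
rewrite -[RHS]cuc; apply: eq_bigr => p _.
have L : lin (fun x => act p.1 x) by linsolve2.
by rewrite -(lin_sumE _ _ L) (antiiR hS SK SinvK) (linZ _ _ L) act_one.
Qed.


Lemma M3 c g d h1 h2 :
  act (act c g * d) (Sinv (m h1 h2)) =
  \sum_(w <- D h2) \sum_(z <- D h1)
     act c (m g (m (Sinv w.2) (Sinv z.2))) * act d (m (Sinv w.1) (Sinv z.1)).
Proof.
rewrite (Sinvmul hS SK SinvK) act_mul.
rewrite (Dmul hB (f := fun u v => act (act c g) u * act d v)); last by linsolve2.
rewrite (Sinvcomul hS SK SinvK (f := fun u1 u2 => \sum_(v <- D (Sinv h1))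
            act (act c g) (m u1 v.1) * act d (m u2 v.2))); last by linsolve2.
apply: eq_bigr => w _.
rewrite (Sinvcomul hS SK SinvK (f := fun v1 v2 =>
            act (act c g) (m (Sinv w.2) v1) * act d (m (Sinv w.1) v2))); last by linsolve2.
by apply: eq_bigr => z _; rewrite act_act.
Qed.

Lemma lam_mul a b :
  lamf (rtwist act coact a b) = ltwist pil psil (lamf a) (lamf b).
Proof.
set Fin := \sum_(p <- coact b) \sum_(r <- coact a) \sum_(z <- D r.2)
    act r.1 (Sinv z.2) * act p.1 (m (Sinv p.2) (Sinv z.1)).
have EL : lamf (rtwist act coact a b) = Fin.
  rewrite /rtwist (lin_sumE _ _ lin_lam).
  transitivity (\sum_(p <- coact b) \sum_(r <- coact a) \sum_(s <- coact p.1)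
       act (act r.1 p.2 * s.1) (Sinv (m r.2 s.2))).
    apply: eq_bigr => p _; rewrite /lamf.
    rewrite (coact_mul (f := fun u h => act u (Sinv h))); last by linsolve2.
    rewrite (coact_act (f := fun u g => \sum_(s <- coact p.1) act (u * s.1) (Sinv (m g s.2))));
      last by linsolve2.
    done.
  transitivity (\sum_(p <- coact b) \sum_(s <- coact p.1) \sum_(r <- coact a)
       act (act r.1 p.2 * s.1) (Sinv (m r.2 s.2))).
    by apply: eq_bigr => p _; rewrite exchange_big.
  rewrite (CAc (G := fun x y z => \sum_(r <- coact a) act (act r.1 z * x) (Sinv (m r.2 y))));
    last by linsolve2.
  transitivity (\sum_(p <- coact b) \sum_(q <- D p.2) \sum_(w <- D q.1)
     (fun x1 x2 x3 => \sum_(r <- coact a) \sum_(z <- D r.2)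
       act r.1 (m x3 (m (Sinv x2) (Sinv z.2))) * act p.1 (m (Sinv x1) (Sinv z.1)))
     w.1 w.2 q.2).
    apply: eq_bigr => p _; apply: eq_bigr => q _ /=.
    rewrite exchange_big; apply: eq_bigr => r _.
    by rewrite M3.
  transitivity (\sum_(p <- coact b) \sum_(q <- D p.2) \sum_(w <- D q.2)
     \sum_(r <- coact a) \sum_(z <- D r.2)
       act r.1 (m w.2 (m (Sinv w.1) (Sinv z.2))) * act p.1 (m (Sinv q.1) (Sinv z.1))).
    apply: eq_bigr => p _.
    rewrite (CA hB (G := fun x1 x2 x3 => \sum_(r <- coact a) \sum_(z <- D r.2)
       act r.1 (m x3 (m (Sinv x2) (Sinv z.2))) * act p.1 (m (Sinv x1) (Sinv z.1)))) //.
    by linsolve2.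
  apply: eq_bigr => p _.
  transitivity (\sum_(q <- D p.2) eps q.2 *: \sum_(r <- coact a) \sum_(z <- D r.2)
       act r.1 (Sinv z.2) * act p.1 (m (Sinv q.1) (Sinv z.1))); last first.
    by apply: (cuR hB (F := fun x => \sum_(r <- coact a) \sum_(z <- D r.2)
       act r.1 (Sinv z.2) * act p.1 (m (Sinv x) (Sinv z.1)))); linsolve2.
  apply: eq_bigr => q _.
  rewrite exchange_big scaler_sumr; apply: eq_bigr => r _.
  rewrite exchange_big scaler_sumr; apply: eq_bigr => z _.
  have L : lin (fun x => act r.1 x * act p.1 (m (Sinv q.1) (Sinv z.1))) by linsolve2.
  by rewrite -(lin_sumE _ _ L) (antiiR' hS SK SinvK) (linZ _ _ L).
have ER : ltwist pil psil (lamf a) (lamf b) = Fin.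
  rewrite /ltwist /psil /pil big_map /=.
  have LR : lin (fun x => \sum_(t <- coact x) t.1 * act (lamf b) (Sinv t.2)) by linsolve2.
  rewrite {1}/lamf (lin_sumE _ _ LR).
  transitivity (\sum_(r <- coact a) \sum_(y <- coact r.1)
      act y.1 (Sinv r.2) * act (lamf b) (Sinv y.2)).
    apply: eq_bigr => r _.
    by rewrite (coact_act (f := fun u h => u * act (lamf b) (Sinv h))) //; linsolve2.
  rewrite (CAc (G := fun x y z => act x (Sinv z) * act (lamf b) (Sinv y))); last first.
    by linsolve2.
  rewrite /Fin exchange_big; apply: eq_bigr => r _.
  rewrite exchange_big; apply: eq_bigr => z _.
  have L : lin (fun x => act x (Sinv z.1)) by linsolve2.
  rewrite /lamf (lin_sumE _ _ L) mulr_sumr.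
  by apply: eq_bigr => p _; rewrite act_act.
by rewrite EL ER.
Qed.

End Main.

Theorem theorem4p8 (k : fieldType) (A : algType k) (H : lmodType k)
  (B : bialg H) (S Sinv : H -> H)
  (act : A -> H -> A) (coact : A -> seq (A * H)) :
  is_hopf B S -> cancel S Sinv -> cancel Sinv S ->
  right_twisting_datum B act coact ->
  let pil : H -> A -> A := fun h a => act a h in
  let psil : A -> seq (H * A) := fun a => [seq (Sinv p.2, p.1) | p <- coact a] in
  let lam : A -> A := fun a => \sum_(p <- coact a) act p.1 (Sinv p.2) in
  let laminv : A -> A := fun a => \sum_(p <- coact a) act p.1 p.2 in
  left_twisting_datum (bialg_op B) pil psil /\
  [/\ lin lam, lam 1 = 1,
      forall a b, lam (rtwist act coact a b) = ltwist pil psil (lam a) (lam b),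
      cancel lam laminv & cancel laminv lam].
Proof.
move=> hS SK SinvK hR pil psil lam laminv.
split; first exact: (left_datum hS SK SinvK hR).
split.
- exact: (lin_lam hS SK SinvK hR).
- exact: (lam1 hS SK SinvK hR).
- exact: (lam_mul hS SK SinvK hR).
- exact: (lamK hS SK SinvK hR).
- exact: (laminvK hS SK SinvK hR).
Qed.
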